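(* Let $f\neq 0$ and $\mu\in\mathbb{R}$ with $\mu\notin\{0,1,-1\}$. Consider the plane curve $\gamma(\xi)=\big(r(\xi)\cos\xi,\ r(\xi)\sin\xi\big)$, where $$r(\xi)=f\left(\mu\cos\xi+\sqrt{2-\cos^2\xi}\right),$$ traversed in the direction of increasing $\xi$, and let $k(\xi)$ denote its signed curvature with respect to this orientation. Then: (i) At $\xi=0$ the curve passes through $(f(\mu+1),0)$ with unit tangent $(\cos\tau,\sin\tau)$, $\tau=\frac{\pi}{2}\,\mathrm{sgn}[f(\mu+1)]$, and curvature $k(0)=\dfrac{2\mu}{|f|\,|\mu+1|\,(\mu+1)}$; at $\xi=\pi$ it passes through $(f(\mu-1),0)$ with tangent angle $\tau=\frac{\pi}{2}\,\mathrm{sgn}[f(\mu-1)]$ and curvature $k(\pi)=\dfrac{2\mu}{|f|\,|\mu-1|\,(\mu-1)}$. (ii) The circles of curvature (osculating circles) of the curve at the points $\xi=0$ and $\xi=\pi$ are concentric, with common center $\left(f\,\dfrac{\mu^2-1}{2\mu},\,0\right)$. (iii) If $|\mu|>1$ (so that $k(0)$ and $k(\pi)$ have the same sign), then along the arc $0\le\xi\le\pi$ the curvature varies monotonically with arc length, and the total turning angle of the tangent along this arc is $2\pi$.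
   Context: Signed curvature of a regular parametrized plane curve $(x(\xi),y(\xi))$ is $k=(x'y''-y'x'')/(x'^2+y'^2)^{3/2}$. The curve is the one given in implicit form by $\left(x^2+y^2-\mu f x\right)^2=f^2(x^2+2y^2)$. The ''circle of curvature'' at a point is the circle tangent to the curve there with radius $1/|k|$ and center on the normal on the side of curvature. *)

(* Defs.v *)
From Stdlib Require Import Reals.
From Coquelicot Require Import Coquelicot.
Open Scope R_scope.

Definition rr (f mu xi : R) : R := f * (mu * cos xi + sqrt (2 - (cos xi) ^ 2)).

Definition gx (f mu : R) (xi : R) : R := rr f mu xi * cos xi.
Definition gy (f mu : R) (xi : R) : R := rr f mu xi * sin xi.

Definition speed (X Y : R -> R) (t : R) : R :=
  sqrt (Derive X t ^ 2 + Derive Y t ^ 2).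

Definition curvature (X Y : R -> R) (t : R) : R :=
  (Derive X t * Derive (Derive Y) t - Derive Y t * Derive (Derive X) t)
  / (speed X Y t) ^ 3.

Definition tangent_x (X Y : R -> R) (t : R) : R := Derive X t / speed X Y t.
Definition tangent_y (X Y : R -> R) (t : R) : R := Derive Y t / speed X Y t.

(* center of the circle of curvature: gamma + (1/k) N, where N = (-T_y, T_x)
   is the left unit normal; with signed k this lies on the side of curvature,
   at distance 1/|k|. *)
Definition center_x (X Y : R -> R) (t : R) : R :=
  X t - tangent_y X Y t / curvature X Y t.
Definition center_y (X Y : R -> R) (t : R) : R :=
  Y t + tangent_x X Y t / curvature X Y t.

Definition arclen (X Y : R -> R) (t : R) : R := RInt (speed X Y) 0 t.

Definition Rsgn (x : R) : R :=
  if Rlt_dec 0 x then 1 else if Rlt_dec x 0 then -1 else 0.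

(* Main.v *)
Require Import Defs.
From Stdlib Require Import Reals Lra Lia Psatz.
From Coquelicot Require Import Coquelicot.
Open Scope R_scope.
Definition r0 mu t := mu * cos t + sqrt (2 - cos t ^ 2).
Definition r1 mu t := sin t * (cos t / sqrt (2 - cos t ^ 2) - mu).
Definition r2 mu t := cos t * (cos t / sqrt (2 - cos t ^ 2) - mu)
   - sin t ^ 2 * (sqrt (2 - cos t ^ 2) ^ 2 + cos t ^ 2) / sqrt (2 - cos t ^ 2) ^ 3.

Lemma qpos t : 0 < 2 - cos t ^ 2.
Proof. pose proof (COS_bound t). nra. Qed.
Lemma sqpos t : 0 < sqrt (2 - cos t ^ 2).
Proof. apply sqrt_lt_R0, qpos. Qed.

Ltac fixq t := try replace (2 + - (cos t * (cos t * 1))) with (2 - cos t ^ 2) by ring.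

Lemma d_r0 mu t : is_derive (r0 mu) t (r1 mu t).
Proof.
  unfold r0, r1. pose proof (qpos t). pose proof (sqpos t).
  auto_derive. lra. fixq t. set (q := sqrt _) in *. field. lra.
Qed.
Lemma d_r1 mu t : is_derive (r1 mu) t (r2 mu t).
Proof.
  unfold r1, r2. pose proof (qpos t). pose proof (sqpos t).
  auto_derive. repeat split; fixq t; lra. fixq t. set (q := sqrt _) in *. field. lra.
Qed.
Ltac rwD := match goal with
 | |- context [Derive (fun x => r0 ?m x) ?t] => replace (Derive (fun x => r0 m x) t) with (r1 m t) by (symmetry; apply is_derive_unique, d_r0)
 end; try match goal with
 | |- context [Derive (fun x => r1 ?m x) ?t] => replace (Derive (fun x => r1 m x) t) with (r2 m t) by (symmetry; apply is_derive_unique, d_r1)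
 end.
Definition X1 f mu t := f * (r1 mu t * cos t - r0 mu t * sin t).
Definition Y1 f mu t := f * (r1 mu t * sin t + r0 mu t * cos t).
Definition X2 f mu t := f * (r2 mu t * cos t - 2 * r1 mu t * sin t - r0 mu t * cos t).
Definition Y2 f mu t := f * (r2 mu t * sin t + 2 * r1 mu t * cos t - r0 mu t * sin t).

Lemma dX f mu t : is_derive (fun t => f * r0 mu t * cos t) t (X1 f mu t).
Proof.
  unfold X1. auto_derive. exists (r1 mu t); apply d_r0.
  rwD. ring.
Qed.
Lemma dY f mu t : is_derive (fun t => f * r0 mu t * sin t) t (Y1 f mu t).
Proof.
  unfold Y1. auto_derive. exists (r1 mu t); apply d_r0.
  rwD. ring.
Qed.
Lemma dX1 f mu t : is_derive (X1 f mu) t (X2 f mu t).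
Proof.
  unfold X1, X2. auto_derive. split; [eexists; apply d_r1 | split; [eexists; apply d_r0 | exact I]].
  rwD. ring.
Qed.
Lemma dY1 f mu t : is_derive (Y1 f mu) t (Y2 f mu t).
Proof.
  unfold Y1, Y2. auto_derive. split; [eexists; apply d_r1 | split; [eexists; apply d_r0 | exact I]].
  rwD. ring.
Qed.

Lemma DX f mu t : Derive (gx f mu) t = X1 f mu t.
Proof. apply is_derive_unique. exact (dX f mu t). Qed.
Lemma DY f mu t : Derive (gy f mu) t = Y1 f mu t.
Proof. apply is_derive_unique. exact (dY f mu t). Qed.
Lemma DDX f mu t : Derive (Derive (gx f mu)) t = X2 f mu t.
Proof. rewrite (Derive_ext _ (X1 f mu)) by apply DX. apply is_derive_unique, dX1. Qed.
Lemma DDY f mu t : Derive (Derive (gy f mu)) t = Y2 f mu t.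
Proof. rewrite (Derive_ext _ (Y1 f mu)) by apply DY. apply is_derive_unique, dY1. Qed.

Lemma sqrt_sq a : sqrt (a ^ 2) = Rabs a.
Proof. rewrite <- Rsqr_pow2. apply sqrt_Rsqr_abs. Qed.

Lemma endpt f mu t e : cos t = e -> sin t = 0 -> e * e = 1 ->
  gx f mu t = f * (mu + e) /\ gy f mu t = 0 /\
  Derive (gx f mu) t = 0 /\ Derive (gy f mu) t = f * (mu + e) /\
  Derive (Derive (gx f mu)) t = -2 * mu * f /\ Derive (Derive (gy f mu)) t = 0.
Proof.
  intros hc hs he.
  rewrite DX, DY, DDX, DDY.
  assert (hq : sqrt (2 - cos t ^ 2) = 1).
  { rewrite hc. replace (2 - e^2) with 1 by nra. apply sqrt_1. }
  unfold gx, gy, rr, X1, Y1, X2, Y2, r0, r1, r2. rewrite hq, hc, hs.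
  assert (he2 : (e - 1) * (e + 1) = 0) by (ring_simplify; lra).
  apply Rmult_integral in he2.
  destruct he2 as [he2 | he2]; replace e with (-(-e)) by ring; [replace (-e) with (-1) by lra | replace (-e) with 1 by lra];
  repeat split; field.
Qed.

Lemma endpt_all f mu t e : cos t = e -> sin t = 0 -> e * e = 1 -> f <> 0 -> mu <> 0 -> mu + e <> 0 ->
  let a := f * (mu + e) in
  gx f mu t = a /\ gy f mu t = 0 /\
  speed (gx f mu) (gy f mu) t = Rabs a /\
  tangent_x (gx f mu) (gy f mu) t = 0 /\
  tangent_y (gx f mu) (gy f mu) t = a / Rabs a /\
  curvature (gx f mu) (gy f mu) t = 2 * mu * f * a / (Rabs a) ^ 3 /\
  center_x (gx f mu) (gy f mu) t = f * (mu ^ 2 - 1) / (2 * mu) /\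
  center_y (gx f mu) (gy f mu) t = 0.
Proof.
  intros hc hs he hf hmu hme a.
  destruct (endpt f mu t e hc hs he) as (h1 & h2 & h3 & h4 & h5 & h6).
  assert (hsp : speed (gx f mu) (gy f mu) t = Rabs a).
  { unfold speed. rewrite h3, h4. rewrite <- sqrt_sq. f_equal. unfold a. ring. }
  assert (ha : a <> 0) by (unfold a; apply Rmult_integral_contrapositive; tauto).
  assert (hA : Rabs a <> 0) by (apply Rabs_no_R0; exact ha).
  assert (hk : curvature (gx f mu) (gy f mu) t = 2 * mu * f * a / (Rabs a) ^ 3).
  { unfold curvature. rewrite hsp, h3, h4, h5, h6. fold a. field. exact hA. }
  unfold center_x, center_y, tangent_x, tangent_y.
  rewrite hk, hsp, h1, h2, h3, h4. fold a.
  repeat split; try (field; assumption).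
  2: (unfold Rdiv; ring).
  unfold a in *. replace (mu^2-1) with (mu^2 - e*e) by (rewrite he; ring).
  destruct (Rcase_abs (f * (mu + e))) as [hn | hp];
    [rewrite (Rabs_left _ hn) | rewrite (Rabs_right _ hp)];
    field; repeat split; try assumption; lra.
Qed.

Lemma Rsgn_trig a : a <> 0 -> cos (PI / 2 * Rsgn a) = 0 /\ sin (PI / 2 * Rsgn a) = a / Rabs a.
Proof.
  intros ha. unfold Rsgn.
  destruct (Rlt_dec 0 a) as [hp | hp].
  - rewrite Rmult_1_r, cos_PI2, sin_PI2, Rabs_right by lra. split; [reflexivity | field; exact ha].
  - destruct (Rlt_dec a 0) as [hn | hn]; [| lra].
    replace (PI / 2 * -1) with (- (PI/2)) by ring.
    rewrite cos_neg, sin_neg, cos_PI2, sin_PI2, Rabs_left by lra.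
    split; [reflexivity | field; exact ha].
Qed.

Lemma curv_simpl f mu m : f <> 0 -> m <> 0 ->
  2 * mu * f * (f * m) / Rabs (f * m) ^ 3 = 2 * mu / (Rabs f * Rabs m * m).
Proof.
  intros hf hm. rewrite Rabs_mult.
  destruct (Rcase_abs f) as [h1 | h1]; [rewrite (Rabs_left _ h1) | rewrite (Rabs_right _ h1)];
  (destruct (Rcase_abs m) as [h2 | h2]; [rewrite (Rabs_left _ h2) | rewrite (Rabs_right _ h2)]);
  field; split; assumption.
Qed.

Theorem part12 (f mu : R) (hf : f <> 0)
  (hmu0 : mu <> 0) (hmu1 : mu <> 1) (hmum1 : mu <> -1) :
  let X := gx f mu in
  let Y := gy f mu in
  let k := curvature X Y in
  (X 0 = f * (mu + 1) /\ Y 0 = 0 /\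
   speed X Y 0 <> 0 /\
   tangent_x X Y 0 = cos (PI / 2 * Rsgn (f * (mu + 1))) /\
   tangent_y X Y 0 = sin (PI / 2 * Rsgn (f * (mu + 1))) /\
   k 0 = 2 * mu / (Rabs f * Rabs (mu + 1) * (mu + 1))) /\
  (X PI = f * (mu - 1) /\ Y PI = 0 /\
   speed X Y PI <> 0 /\
   tangent_x X Y PI = cos (PI / 2 * Rsgn (f * (mu - 1))) /\
   tangent_y X Y PI = sin (PI / 2 * Rsgn (f * (mu - 1))) /\
   k PI = 2 * mu / (Rabs f * Rabs (mu - 1) * (mu - 1))) /\
  (center_x X Y 0 = f * (mu ^ 2 - 1) / (2 * mu) /\ center_y X Y 0 = 0 /\
   center_x X Y PI = f * (mu ^ 2 - 1) / (2 * mu) /\ center_y X Y PI = 0).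
Proof.
  intros X Y k. subst X Y k.
  assert (h1 : mu + 1 <> 0) by lra.
  assert (h2 : mu + -1 <> 0) by lra.
  destruct (endpt_all f mu 0 1 cos_0 sin_0 ltac:(ring) hf hmu0 h1) as (a1 & a2 & a3 & a4 & a5 & a6 & a7 & a8).
  destruct (endpt_all f mu PI (-1) cos_PI sin_PI ltac:(ring) hf hmu0 h2) as (b1 & b2 & b3 & b4 & b5 & b6 & b7 & b8).
  replace (mu + -1) with (mu - 1) in * by ring.
  assert (n1 : f * (mu + 1) <> 0) by (apply Rmult_integral_contrapositive; tauto).
  assert (n2 : f * (mu - 1) <> 0) by (apply Rmult_integral_contrapositive; split; [tauto | lra]).
  destruct (Rsgn_trig _ n1) as [c1 s1]. destruct (Rsgn_trig _ n2) as [c2 s2].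
  rewrite a1, a2, a3, a4, a5, a6, a7, a8, b1, b2, b3, b4, b5, b6, b7, b8, c1, s1, c2, s2.
  rewrite !curv_simpl by lra.
  repeat split; try reflexivity; apply Rabs_no_R0; assumption.
Qed.

Definition N0 mu t := r0 mu t ^ 2 + 2 * r1 mu t ^ 2 - r0 mu t * r2 mu t.
Definition D0 mu t := r0 mu t ^ 2 + r1 mu t ^ 2.

Lemma sc1 t : sin t ^ 2 + cos t ^ 2 = 1.
Proof. rewrite <- !Rsqr_pow2. apply sin2_cos2. Qed.

Lemma speed_form f mu t : speed (gx f mu) (gy f mu) t = sqrt (f ^ 2 * D0 mu t).
Proof.
  unfold speed. rewrite DX, DY. f_equal. unfold X1, Y1, D0.
  transitivity (f ^ 2 * (r0 mu t ^ 2 + r1 mu t ^ 2) * (sin t ^ 2 + cos t ^ 2)); [ring |].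
  rewrite sc1. ring.
Qed.

Lemma curv_form f mu t : curvature (gx f mu) (gy f mu) t = f ^ 2 * N0 mu t / (sqrt (f ^ 2 * D0 mu t)) ^ 3.
Proof.
  unfold curvature. rewrite <- speed_form. f_equal.
  rewrite DX, DY, DDX, DDY. unfold X1, Y1, X2, Y2, N0.
  transitivity (f ^ 2 * (r0 mu t ^ 2 + 2 * r1 mu t ^ 2 - r0 mu t * r2 mu t) * (sin t ^ 2 + cos t ^ 2)); [ring |].
  rewrite sc1. ring.
Qed.

Definition qf u := sqrt (2 - u ^ 2).
Definition PP mu u := 2 * mu * (3 * u - 2 * u ^ 3) + qf u * (4 * mu ^ 2 + 6 - (2 * mu ^ 2 + 6) * u ^ 2).
Definition EE mu u := mu ^ 2 * (2 - u ^ 2) + 4 - 3 * u ^ 2 + 2 * mu * u * qf u.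
Definition KK mu u := PP mu u / (EE mu u * sqrt (EE mu u)).

Lemma poly_D0 mu c q : q ^ 2 = 2 - c ^ 2 ->
  (mu*c+q)^2*q^2 + (1-c^2)*(c-mu*q)^2 = mu ^ 2 * (2 - c ^ 2) + 4 - 3 * c ^ 2 + 2 * mu * c * q.
Proof.
  intros hq.
  assert (H : (mu*c+q)^2*q^2 + (1-c^2)*(c-mu*q)^2 - (mu ^ 2 * (2 - c ^ 2) + 4 - 3 * c ^ 2 + 2 * mu * c * q)
     = (q^2 - (2 - c^2)) * ((2) + (1)*q^2 + (-1)*c^2 + (2)*mu^1*c^1*q^1 + (1)*mu^2)) by ring.
  assert (Hz : q^2 - (2 - c^2) = 0) by lra. rewrite Hz, Rmult_0_l in H. lra.
Qed.

Lemma poly_N0 mu c q : q ^ 2 = 2 - c ^ 2 ->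
  (mu*c+q)^2*q^3 + 2*(1-c^2)*(c-mu*q)^2*q - (mu*c+q)*(c*(c-mu*q)*q^2 - (1-c^2)*(q^2+c^2))
  = 2 * mu * (3 * c - 2 * c ^ 3) + q * (4 * mu ^ 2 + 6 - (2 * mu ^ 2 + 6) * c ^ 2).
Proof.
  intros hq.
  assert (H : (mu*c+q)^2*q^3 + 2*(1-c^2)*(c-mu*q)^2*q - (mu*c+q)*(c*(c-mu*q)*q^2 - (1-c^2)*(q^2+c^2))
   - (2 * mu * (3 * c - 2 * c ^ 3) + q * (4 * mu ^ 2 + 6 - (2 * mu ^ 2 + 6) * c ^ 2))
   = (q^2 - (2 - c^2)) * ((3)*q^1 + (1)*q^3 + (-3)*c^2*q^1 + (3)*mu^1*c^1 + (3)*mu^1*c^1*q^2 + (-1)*mu^1*c^3 + (2)*mu^2*q^1)) by ring.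
  assert (Hz : q^2 - (2 - c^2) = 0) by lra. rewrite Hz, Rmult_0_l in H. lra.
Qed.

Lemma qsq t : sqrt (2 - cos t ^ 2) ^ 2 = 2 - cos t ^ 2.
Proof. apply pow2_sqrt. pose proof (qpos t). lra. Qed.
Lemma ssq t : sin t ^ 2 = 1 - cos t ^ 2.
Proof. pose proof (sc1 t). lra. Qed.

Lemma D0_rel mu t : D0 mu t * sqrt (2 - cos t ^ 2) ^ 2 = EE mu (cos t).
Proof.
  unfold D0, r0, r1, EE, qf. pose proof (qsq t) as hq. pose proof (ssq t) as hs. pose proof (sqpos t).
  set (q := sqrt (2 - cos t ^ 2)) in *. set (c := cos t) in *. set (s := sin t) in *.
  rewrite <- poly_D0 by exact hq. rewrite <- hs. field. lra.
Qed.

Lemma N0_rel mu t : N0 mu t * sqrt (2 - cos t ^ 2) ^ 3 = PP mu (cos t).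
Proof.
  unfold N0, r0, r1, r2, PP, qf. pose proof (qsq t) as hq. pose proof (ssq t) as hs. pose proof (sqpos t).
  set (q := sqrt (2 - cos t ^ 2)) in *. set (c := cos t) in *. set (s := sin t) in *.
  rewrite <- poly_N0 by exact hq. rewrite <- hs. field. lra.
Qed.

Lemma qf_sq u : -1 <= u <= 1 -> qf u ^ 2 = 2 - u ^ 2.
Proof. intros hu. unfold qf. apply pow2_sqrt. nra. Qed.
Lemma qf_ge1 u : -1 <= u <= 1 -> 1 <= qf u.
Proof.
  intros hu. unfold qf. rewrite <- sqrt_1. apply sqrt_le_1_alt. nra.
Qed.

Lemma EE_pos mu u : mu <> 1 -> mu <> -1 -> -1 <= u <= 1 -> 0 < EE mu u.
Proof.
  intros h1 h2 hu. pose proof (qf_sq u hu) as hq. pose proof (qf_ge1 u hu) as hq1.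
  unfold EE. set (q := qf u) in *.
  assert (HE : mu ^ 2 * (2 - u ^ 2) + 4 - 3 * u ^ 2 + 2 * mu * u * q = (mu*q+u)^2 + 4*(1-u^2)).
  { rewrite <- hq. ring. }
  rewrite HE.
  destruct (Rlt_dec (u^2) 1) as [hl | hl].
  - pose proof (pow2_ge_0 (mu*q+u)). lra.
  - assert (hu2 : (u - 1) * (u + 1) = 0) by nra.
    assert (hq2 : q = 1) by nra.
    rewrite hq2.
    apply Rmult_integral in hu2. destruct hu2 as [hu2 | hu2].
    + replace u with 1 by lra. assert (hm : mu + 1 <> 0) by lra.
      pose proof (Rsqr_pos_lt _ hm). unfold Rsqr in *. nra.
    + replace u with (-1) by lra. assert (hm : mu - 1 <> 0) by lra.
      pose proof (Rsqr_pos_lt _ hm). unfold Rsqr in *. nra.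
Qed.

Lemma D0_pos mu t : mu <> 1 -> mu <> -1 -> 0 < D0 mu t.
Proof.
  intros h1 h2. pose proof (EE_pos mu (cos t) h1 h2 (COS_bound t)) as hE.
  rewrite <- D0_rel in hE. pose proof (sqpos t).
  assert (0 < sqrt (2 - cos t ^ 2) ^ 2) by nra. nra.
Qed.

Lemma kspeed f mu t : f <> 0 -> mu <> 1 -> mu <> -1 ->
  curvature (gx f mu) (gy f mu) t * speed (gx f mu) (gy f mu) t = N0 mu t / D0 mu t.
Proof.
  intros hf h1 h2. rewrite curv_form, speed_form.
  pose proof (D0_pos mu t h1 h2) as hD.
  assert (hf2 : 0 < f ^ 2) by (apply pow2_gt_0; exact hf).
  assert (hS : 0 < sqrt (f ^ 2 * D0 mu t)) by (apply sqrt_lt_R0; nra).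
  assert (hS2 : sqrt (f ^ 2 * D0 mu t) ^ 2 = f ^ 2 * D0 mu t) by (apply pow2_sqrt; nra).
  replace (sqrt (f ^ 2 * D0 mu t) ^ 3) with (sqrt (f ^ 2 * D0 mu t) ^ 2 * sqrt (f ^ 2 * D0 mu t)) by ring.
  rewrite hS2. field. repeat split; lra.
Qed.

Lemma kK f mu t : f <> 0 -> mu <> 1 -> mu <> -1 ->
  curvature (gx f mu) (gy f mu) t = KK mu (cos t) / Rabs f.
Proof.
  intros hf h1 h2. rewrite curv_form.
  pose proof (EE_pos mu (cos t) h1 h2 (COS_bound t)) as hE.
  pose proof (sqpos t) as hq.
  assert (hD : D0 mu t = EE mu (cos t) / sqrt (2 - cos t ^ 2) ^ 2).
  { rewrite <- D0_rel. field. lra. }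
  assert (hN : N0 mu t = PP mu (cos t) / sqrt (2 - cos t ^ 2) ^ 3).
  { rewrite <- N0_rel. field. lra. }
  rewrite hD, hN. unfold KK.
  set (q := sqrt (2 - cos t ^ 2)) in *. set (e := EE mu (cos t)) in *.
  replace (f ^ 2 * (e / q ^ 2)) with ((f / q) ^ 2 * e) by (field; lra).
  rewrite sqrt_mult_alt by (apply pow2_ge_0).
  rewrite sqrt_sq, Rabs_div by lra. rewrite (Rabs_right q) by lra.
  assert (hse : 0 < sqrt e) by (apply sqrt_lt_R0; exact hE).
  assert (hse2 : sqrt e ^ 2 = e) by (apply pow2_sqrt; lra).
  assert (hfa : 0 < Rabs f) by (apply Rabs_pos_lt; exact hf).
  assert (hfa2 : Rabs f ^ 2 = f ^ 2) by (apply pow2_abs).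
  rewrite <- hfa2.
  replace ((Rabs f / q * sqrt e) ^ 3) with (Rabs f ^ 3 / q ^ 3 * (sqrt e ^ 2 * sqrt e)) by (field; lra).
  rewrite hse2. field. repeat split; lra.
Qed.

Lemma d_quot (p e : R -> R) u dp de : is_derive p u dp -> is_derive e u de -> 0 < e u ->
  is_derive (fun u => p u / (e u * sqrt (e u))) u ((2 * dp * e u - 3 * p u * de) / (2 * e u ^ 2 * sqrt (e u))).
Proof.
  intros hp he hpos.
  assert (hw : 0 < sqrt (e u)) by (apply sqrt_lt_R0; exact hpos).
  assert (hw2 : sqrt (e u) ^ 2 = e u) by (apply pow2_sqrt; lra).
  auto_derive.
  - repeat split; try (eexists; eassumption); try lra; try (apply Rgt_not_eq; nra).
  - replace (Derive (fun x => p x) u) with dp by (symmetry; apply is_derive_unique; exact hp).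
    replace (Derive (fun x => e x) u) with de by (symmetry; apply is_derive_unique; exact he).
    set (w := sqrt (e u)) in *. rewrite <- hw2. field. lra.
Qed.

Definition dPP mu u := 2 * mu * (3 - 6 * u ^ 2) - (u / qf u) * (4 * mu ^ 2 + 6 - (2 * mu ^ 2 + 6) * u ^ 2)
   - 2 * (2 * mu ^ 2 + 6) * u * qf u.
Definition dEE mu u := -2 * mu ^ 2 * u - 6 * u + 2 * mu * qf u - 2 * mu * u ^ 2 / qf u.

Ltac fixu u := try replace (2 + - (u * (u * 1))) with (2 - u ^ 2) by ring.

Lemma d_PP mu u : -1 <= u <= 1 -> is_derive (PP mu) u (dPP mu u).
Proof.
  intros hu. assert (h0 : 0 < 2 - u ^ 2) by nra. pose proof (qf_ge1 u hu) as hq.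
  unfold PP, dPP, qf in *. auto_derive.
  - repeat split; fixu u; lra.
  - fixu u. set (q := sqrt (2 - u ^ 2)) in *. field. lra.
Qed.
Lemma d_EE mu u : -1 <= u <= 1 -> is_derive (EE mu) u (dEE mu u).
Proof.
  intros hu. assert (h0 : 0 < 2 - u ^ 2) by nra. pose proof (qf_ge1 u hu) as hq.
  unfold EE, dEE, qf in *. auto_derive.
  - repeat split; fixu u; lra.
  - fixu u. set (q := sqrt (2 - u ^ 2)) in *. field. lra.
Qed.

Lemma poly_G mu c q : q ^ 2 = 2 - c ^ 2 ->
  2 * (2*mu*(3-6*c^2)*q - c*(4*mu^2+6-(2*mu^2+6)*c^2) - 2*(2*mu^2+6)*c*q^2)
    * (mu ^ 2 * (2 - c ^ 2) + 4 - 3 * c ^ 2 + 2 * mu * c * q)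
  - 3 * (2 * mu * (3 * c - 2 * c ^ 3) + q * (4 * mu ^ 2 + 6 - (2 * mu ^ 2 + 6) * c ^ 2))
    * (-2*mu^2*c*q - 6*c*q + 2*mu*q^2 - 2*mu*c^2)
  = - 24 * (1 + mu ^ 2) * (c + mu * q).
Proof.
  intros hq.
  assert (H : 2 * (2*mu*(3-6*c^2)*q - c*(4*mu^2+6-(2*mu^2+6)*c^2) - 2*(2*mu^2+6)*c*q^2)
    * (mu ^ 2 * (2 - c ^ 2) + 4 - 3 * c ^ 2 + 2 * mu * c * q)
  - 3 * (2 * mu * (3 * c - 2 * c ^ 3) + q * (4 * mu ^ 2 + 6 - (2 * mu ^ 2 + 6) * c ^ 2))
    * (-2*mu^2*c*q - 6*c*q + 2*mu*q^2 - 2*mu*c^2) - (- 24 * (1 + mu ^ 2) * (c + mu * q))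
   = (q^2 - (2 - c^2)) * ((12)*c^1 + (-36)*c^3 + (-36)*mu^1*q^1 + (-12)*mu^1*c^2*q^1 + (16)*mu^2*c^1 + (-48)*mu^2*c^3 + (-24)*mu^3*q^1 + (-4)*mu^3*c^2*q^1 + (8)*mu^4*c^1 + (-4)*mu^4*c^3)) by ring.
  assert (Hz : q^2 - (2 - c^2) = 0) by lra. rewrite Hz, Rmult_0_l in H. lra.
Qed.

Lemma d_KK mu u : mu <> 1 -> mu <> -1 -> -1 <= u <= 1 ->
  is_derive (KK mu) u (- 12 * (1 + mu ^ 2) * (u + mu * qf u) / (qf u * EE mu u ^ 2 * sqrt (EE mu u))).
Proof.
  intros h1 h2 hu.
  pose proof (EE_pos mu u h1 h2 hu) as hE.
  pose proof (qf_ge1 u hu) as hq1. pose proof (qf_sq u hu) as hq.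
  assert (hw : 0 < sqrt (EE mu u)) by (apply sqrt_lt_R0; exact hE).
  assert (HG : qf u * (2 * dPP mu u * EE mu u - 3 * PP mu u * dEE mu u) = - 24 * (1 + mu ^ 2) * (u + mu * qf u)).
  { rewrite <- (poly_G mu u (qf u) hq). unfold dPP, dEE, PP, EE. field. lra. }
  replace (- 12 * (1 + mu ^ 2) * (u + mu * qf u) / (qf u * EE mu u ^ 2 * sqrt (EE mu u)))
      with ((2 * dPP mu u * EE mu u - 3 * PP mu u * dEE mu u) / (2 * EE mu u ^ 2 * sqrt (EE mu u))).
  - exact (d_quot (PP mu) (EE mu) u _ _ (d_PP mu u hu) (d_EE mu u hu) hE).
  - replace (- 12 * (1 + mu ^ 2) * (u + mu * qf u)) with (/2 * (- 24 * (1 + mu ^ 2) * (u + mu * qf u))) by field.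
    rewrite <- HG. field. repeat split; lra.
Qed.

Lemma dK_sign_pos mu u : -1 <= u <= 1 -> mu <> 1 -> mu <> -1 ->
  0 < qf u * EE mu u ^ 2 * sqrt (EE mu u).
Proof.
  intros hu h1 h2. pose proof (EE_pos mu u h1 h2 hu) as hE. pose proof (qf_ge1 u hu).
  assert (0 < sqrt (EE mu u)) by (apply sqrt_lt_R0; exact hE).
  assert (0 < EE mu u ^ 2) by (apply pow_lt; exact hE).
  apply Rmult_lt_0_compat; [apply Rmult_lt_0_compat |]; lra.
Qed.

Lemma KK_decr mu : 1 < mu -> forall x y, -1 <= x -> x < y -> y <= 1 -> KK mu y < KK mu x.
Proof.
  intros hm x y hx hxy hy.
  assert (h1 : mu <> 1) by lra. assert (h2 : mu <> -1) by lra.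
  cut (- KK mu x < - KK mu y); [lra |].
  apply (incr_function_le (fun u => - KK mu u) (Finite (-1)) (Finite 1)
    (fun u => - (- 12 * (1 + mu ^ 2) * (u + mu * qf u) / (qf u * EE mu u ^ 2 * sqrt (EE mu u))))); try (simpl; lra).
  - intros u hu1 hu2. simpl in hu1, hu2. apply (is_derive_opp (KK mu)). apply d_KK; auto.
  - intros u hu1 hu2. simpl in hu1, hu2. pose proof (dK_sign_pos mu u (conj hu1 hu2) h1 h2).
    pose proof (qf_ge1 u (conj hu1 hu2)).
    assert (0 < (1 + mu ^ 2)) by (pose proof (pow2_ge_0 mu); lra).
    assert (0 < u + mu * qf u) by nra.
    assert (0 < 12 * (1 + mu ^ 2) * (u + mu * qf u)) by (apply Rmult_lt_0_compat; lra).
    assert (0 < (12 * (1 + mu ^ 2) * (u + mu * qf u)) / (qf u * EE mu u ^ 2 * sqrt (EE mu u))) by (apply Rdiv_lt_0_compat; lra).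
    unfold Rdiv in *. lra.
Qed.

Lemma KK_incr mu : mu < -1 -> forall x y, -1 <= x -> x < y -> y <= 1 -> KK mu x < KK mu y.
Proof.
  intros hm x y hx hxy hy.
  assert (h1 : mu <> 1) by lra. assert (h2 : mu <> -1) by lra.
  apply (incr_function_le (KK mu) (Finite (-1)) (Finite 1)
    (fun u => - 12 * (1 + mu ^ 2) * (u + mu * qf u) / (qf u * EE mu u ^ 2 * sqrt (EE mu u)))); try (simpl; lra).
  - intros u hu1 hu2. simpl in hu1, hu2. apply d_KK; auto.
  - intros u hu1 hu2. simpl in hu1, hu2. pose proof (dK_sign_pos mu u (conj hu1 hu2) h1 h2).
    pose proof (qf_ge1 u (conj hu1 hu2)).
    assert (0 < (1 + mu ^ 2)) by (pose proof (pow2_ge_0 mu); lra).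
    assert (u + mu * qf u < 0) by nra.
    assert (0 < - 12 * (1 + mu ^ 2) * (u + mu * qf u)) by nra.
    apply Rmult_lt_0_compat; [lra | apply Rinv_0_lt_compat; lra].
Qed.

Lemma d_r2 mu t : ex_derive (r2 mu) t.
Proof.
  unfold r2. pose proof (qpos t). pose proof (sqpos t).
  auto_derive. repeat split; fixq t; try lra. apply Rgt_not_eq; repeat apply Rmult_lt_0_compat; lra.
Qed.

Lemma speed_cont f mu t : f <> 0 -> mu <> 1 -> mu <> -1 -> continuous (speed (gx f mu) (gy f mu)) t.
Proof.
  intros hf h1 h2.
  apply (continuous_ext (fun t => sqrt (f ^ 2 * D0 mu t))).
  { intros x. symmetry. apply speed_form. }
  apply (@ex_derive_continuous R_AbsRing R_NormedModule). unfold D0.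
  pose proof (D0_pos mu t h1 h2) as hD. unfold D0 in hD.
  assert (hf2 : 0 < f ^ 2) by (apply pow2_gt_0; exact hf).
  auto_derive. split; [eexists; apply d_r0 | split; [eexists; apply d_r1 | split; [nra | exact I]]].
Qed.

Lemma speed_pos f mu t : f <> 0 -> mu <> 1 -> mu <> -1 -> 0 < speed (gx f mu) (gy f mu) t.
Proof.
  intros hf h1 h2. rewrite speed_form. apply sqrt_lt_R0.
  pose proof (D0_pos mu t h1 h2). assert (0 < f ^ 2) by (apply pow2_gt_0; exact hf). nra.
Qed.

Lemma arclen_mono f mu a b : f <> 0 -> mu <> 1 -> mu <> -1 ->
  arclen (gx f mu) (gy f mu) a <= arclen (gx f mu) (gy f mu) b -> a <= b.
Proof.
  intros hf h1 h2 hab.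
  destruct (Rle_lt_dec a b) as [h | h]; [exact h | exfalso].
  unfold arclen in hab.
  assert (hc : forall x, continuous (speed (gx f mu) (gy f mu)) x) by (intros; apply speed_cont; auto).
  assert (H := RInt_Chasles (speed (gx f mu) (gy f mu)) 0 b a
    (ex_RInt_continuous _ _ _ (fun z _ => hc z)) (ex_RInt_continuous _ _ _ (fun z _ => hc z))).
  assert (Hp : 0 < RInt (speed (gx f mu) (gy f mu)) b a).
  { apply RInt_gt_0; auto. intros; apply speed_pos; auto. }
  rewrite <- H in hab. change plus with Rplus in hab. simpl in hab. lra.
Qed.

Lemma d_arg (x y : R -> R) t dx dy : is_derive x t dx -> is_derive y t dy ->
  0 < x t ^ 2 + y t ^ 2 -> 0 < sqrt (x t ^ 2 + y t ^ 2) + x t ->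
  is_derive (fun t => 2 * atan (y t / (sqrt (x t ^ 2 + y t ^ 2) + x t))) t
    ((x t * dy - y t * dx) / (x t ^ 2 + y t ^ 2)).
Proof.
  intros hx hy hp hs.
  auto_derive.
  - repeat split; try (eexists; eassumption); try replace (x t * (x t * 1) + y t * (y t * 1)) with (x t ^ 2 + y t ^ 2) by ring; try lra; try (apply Rgt_not_eq; lra).
  - replace (Derive (fun x0 : R => x x0) t) with dx by (symmetry; apply is_derive_unique; exact hx).
    replace (Derive (fun x0 : R => y x0) t) with dy by (symmetry; apply is_derive_unique; exact hy).
    set (a := x t) in *. set (b := y t) in *.
    replace (a * (a * 1) + b * (b * 1)) with (a ^ 2 + b ^ 2) by ring.
    assert (hS : sqrt (a ^ 2 + b ^ 2) ^ 2 = a ^ 2 + b ^ 2) by (apply pow2_sqrt; lra).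
    assert (hS0 : 0 < sqrt (a ^ 2 + b ^ 2)) by (apply sqrt_lt_R0; lra).
    set (S := sqrt (a ^ 2 + b ^ 2)) in *.
    assert (Hden : 1 + b * / (S + a) * (b * / (S + a) * 1) = 2 * S / (S + a)).
    { replace (1 + b * / (S + a) * (b * / (S + a) * 1)) with (((S + a) ^ 2 + b ^ 2) / (S + a) ^ 2) by (field; lra).
      replace ((S + a) ^ 2 + b ^ 2) with (S ^ 2 + 2 * S * a + (a ^ 2 + b ^ 2)) by ring.
      rewrite <- hS. field. lra. }
    rewrite Hden.
    assert (hb : b * b = (S - a) * (S + a)) by (replace ((S - a) * (S + a)) with (S^2 - a^2) by ring; lra).
    rewrite <- hS. field_simplify; try lra.
    replace (b ^ 2) with (S ^ 2 - a ^ 2) by lra. field. split; [lra|]. replace (2 * S ^ 3 + 2 * S ^ 2 * a) with (2 * S ^ 2 * (S + a)) by ring. apply Rgt_not_eq. apply Rmult_lt_0_compat; [apply Rmult_lt_0_compat; [lra | apply pow_lt; lra] | lra].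
Qed.

Definition Fa mu sg t := t + sg * (2 * atan (r0 mu t / (sqrt ((sg * r1 mu t) ^ 2 + r0 mu t ^ 2) + sg * r1 mu t))).

Lemma sg_r1 mu sg t : 0 <= t <= PI -> ((1 < mu /\ sg = -1) \/ (mu < -1 /\ sg = 1)) -> 0 <= sg * r1 mu t.
Proof.
  intros ht hs. unfold r1.
  pose proof (qf_ge1 (cos t) (COS_bound t)) as hq. unfold qf in hq.
  pose proof (COS_bound t) as hc.
  assert (hsn : 0 <= sin t) by (apply sin_ge_0; lra).
  set (q := sqrt (2 - cos t ^ 2)) in *.
  assert (h1 : cos t / q <= 1) by (apply Rmult_le_reg_r with q; [lra | unfold Rdiv; rewrite Rmult_assoc, Rinv_l by lra; lra]).
  assert (h2 : -1 <= cos t / q) by (apply Rmult_le_reg_r with q; [lra | unfold Rdiv; rewrite Rmult_assoc, Rinv_l by lra; lra]).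
  destruct hs as [[hm ->] | [hm ->]]; nra.
Qed.

Lemma d_Fa mu sg t : 0 <= t <= PI -> ((1 < mu /\ sg = -1) \/ (mu < -1 /\ sg = 1)) ->
  is_derive (Fa mu sg) t (N0 mu t / D0 mu t).
Proof.
  intros ht hs.
  assert (hsg : sg * sg = 1) by (destruct hs as [[_ ->] | [_ ->]]; ring).
  assert (h1 : mu <> 1) by (destruct hs as [[? _] | [? _]]; lra).
  assert (h2 : mu <> -1) by (destruct hs as [[? _] | [? _]]; lra).
  pose proof (D0_pos mu t h1 h2) as hD.
  pose proof (sg_r1 mu sg t ht hs) as hr.
  assert (hD' : 0 < (sg * r1 mu t) ^ 2 + r0 mu t ^ 2).
  { replace ((sg * r1 mu t) ^ 2) with (sg * sg * r1 mu t ^ 2) by ring. rewrite hsg. unfold D0 in hD. lra. }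
  assert (hS : 0 < sqrt ((sg * r1 mu t) ^ 2 + r0 mu t ^ 2) + sg * r1 mu t).
  { pose proof (sqrt_lt_R0 _ hD'). lra. }
  assert (Hd := d_arg (fun t => sg * r1 mu t) (r0 mu) t (sg * r2 mu t) (r1 mu t)
     (is_derive_scal _ _ _ _ (d_r1 mu t)) (d_r0 mu t) hD' hS).
  assert (Hs := is_derive_scal _ _ sg _ Hd).
  assert (Hp := is_derive_plus _ _ _ _ _ (is_derive_id t) Hs).
  unfold Fa.
  replace (N0 mu t / D0 mu t) with (plus one (sg * ((sg * r1 mu t * r1 mu t - r0 mu t * (sg * r2 mu t)) /
       ((sg * r1 mu t) ^ 2 + r0 mu t ^ 2)))).
  - exact Hp.
  - change plus with Rplus. change one with 1.
    assert (E1 : sg * ((sg * r1 mu t * r1 mu t - r0 mu t * (sg * r2 mu t)) / ((sg * r1 mu t) ^ 2 + r0 mu t ^ 2))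
      = (sg * sg) * (r1 mu t ^ 2 - r0 mu t * r2 mu t) / ((sg * sg) * r1 mu t ^ 2 + r0 mu t ^ 2)).
    { replace ((sg * r1 mu t) ^ 2) with (sg * sg * r1 mu t ^ 2) in * by ring. field. lra. }
    rewrite E1, hsg. unfold N0, D0 in *. match goal with |- ?a = ?b => change (@eq R a b) end. field. lra.
Qed.

Lemma ND_cont mu t : mu <> 1 -> mu <> -1 -> continuous (fun t => N0 mu t / D0 mu t) t.
Proof.
  intros h1 h2. pose proof (D0_pos mu t h1 h2) as hD.
  apply (@ex_derive_continuous R_AbsRing R_NormedModule).
  unfold N0, D0 in *. auto_derive.
  destruct (d_r2 mu t) as [l2 hl2].
  repeat match goal with
  | |- _ /\ _ => split
  | |- ex_derive (fun x => r0 _ x) _ => exists (r1 mu t); apply d_r0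
  | |- ex_derive (fun x => r1 _ x) _ => exists (r2 mu t); apply d_r1
  | |- ex_derive (fun x => r2 _ x) _ => exists l2; exact hl2
  | |- True => exact I
  end.
  apply Rgt_not_eq. nra.
Qed.

Lemma r_end mu t e : cos t = e -> sin t = 0 -> e * e = 1 -> r0 mu t = mu * e + 1 /\ r1 mu t = 0.
Proof.
  intros hc hs he. unfold r0, r1. rewrite hc, hs.
  replace (2 - e ^ 2) with 1 by nra. rewrite sqrt_1. split; ring.
Qed.

Lemma Fa_end mu sg t e : cos t = e -> sin t = 0 -> e * e = 1 -> mu * e + 1 <> 0 ->
  Fa mu sg t = t + sg * (2 * atan ((mu * e + 1) / Rabs (mu * e + 1))).
Proof.
  intros hc hs he hn. destruct (r_end mu t e hc hs he) as [E0 E1].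
  unfold Fa. rewrite E0, E1. do 3 f_equal. f_equal.
  replace ((sg * 0) ^ 2 + (mu * e + 1) ^ 2) with ((mu * e + 1) ^ 2) by ring.
  rewrite sqrt_sq. rewrite Rmult_0_r, Rplus_0_r. reflexivity.
Qed.

Lemma atan_sgn x : 0 < x -> atan (x / Rabs x) = PI / 4.
Proof. intros h. rewrite Rabs_right by lra. replace (x / x) with 1 by (field; lra). apply atan_1. Qed.
Lemma atan_sgn' x : x < 0 -> atan (x / Rabs x) = - (PI / 4).
Proof. intros h. rewrite Rabs_left by lra. replace (x / - x) with (Ropp 1) by (field; lra). rewrite atan_opp, atan_1. reflexivity. Qed.

Lemma integral_main f mu : f <> 0 -> 1 < Rabs mu ->
  is_RInt (fun xi => curvature (gx f mu) (gy f mu) xi * speed (gx f mu) (gy f mu) xi) 0 PI (2 * PI).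
Proof.
  intros hf hm.
  assert (hs : exists sg, (1 < mu /\ sg = -1) \/ (mu < -1 /\ sg = 1)).
  { destruct (Rcase_abs mu) as [h | h]; [rewrite Rabs_left in hm by lra; exists 1; right; lra |
      rewrite Rabs_right in hm by lra; exists (-1); left; lra]. }
  destruct hs as [sg hs].
  assert (h1 : mu <> 1) by (destruct hs as [[? _] | [? _]]; lra).
  assert (h2 : mu <> -1) by (destruct hs as [[? _] | [? _]]; lra).
  pose proof PI_RGT_0 as hpi.
  apply (is_RInt_ext (fun t => N0 mu t / D0 mu t)).
  { intros x _. symmetry. apply kspeed; auto. }
  replace (2 * PI) with (minus (Fa mu sg PI) (Fa mu sg 0)).
  - apply (@is_RInt_derive R_CompleteNormedModule (Fa mu sg) (fun t => N0 mu t / D0 mu t)).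
    + intros x hx. rewrite Rmin_left, Rmax_right in hx by lra. apply d_Fa; auto.
    + intros x _. apply ND_cont; auto.
  - change minus with Rminus. match goal with |- ?a = ?b => change (@eq R a b) end.
    rewrite (Fa_end mu sg PI (-1) cos_PI sin_PI ltac:(ring)) by lra.
    rewrite (Fa_end mu sg 0 1 cos_0 sin_0 ltac:(ring)) by lra.
    destruct hs as [[hm' ->] | [hm' ->]].
    + rewrite atan_sgn' by lra. rewrite atan_sgn by lra. field.
    + rewrite atan_sgn by lra. rewrite atan_sgn' by lra. field.
Qed.

Lemma mono_part f mu : f <> 0 -> 1 < Rabs mu ->
  let k := curvature (gx f mu) (gy f mu) in
  (forall a b, 0 <= a <= PI -> 0 <= b <= PI ->
        arclen (gx f mu) (gy f mu) a <= arclen (gx f mu) (gy f mu) b -> k a <= k b) \/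
  (forall a b, 0 <= a <= PI -> 0 <= b <= PI ->
        arclen (gx f mu) (gy f mu) a <= arclen (gx f mu) (gy f mu) b -> k b <= k a).
Proof.
  intros hf hm k. subst k.
  assert (hfa : 0 < / Rabs f) by (apply Rinv_0_lt_compat, Rabs_pos_lt, hf).
  destruct (Rcase_abs mu) as [hneg | hpos].
  - rewrite Rabs_left in hm by lra.
    assert (h1 : mu <> 1) by lra. assert (h2 : mu <> -1) by lra.
    right. intros a b ha hb hl.
    pose proof (arclen_mono f mu a b hf h1 h2 hl) as hab.
    rewrite !kK by auto. unfold Rdiv.
    apply Rmult_le_compat_r; [lra |].
    destruct (Req_dec a b) as [-> | hne]; [lra |].
    assert (hc : cos b < cos a) by (apply cos_decreasing_1; lra).
    left. apply (KK_incr mu); try lra; apply COS_bound.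
  - rewrite Rabs_right in hm by lra.
    assert (h1 : mu <> 1) by lra. assert (h2 : mu <> -1) by lra.
    left. intros a b ha hb hl.
    pose proof (arclen_mono f mu a b hf h1 h2 hl) as hab.
    rewrite !kK by auto. unfold Rdiv.
    apply Rmult_le_compat_r; [lra |].
    destruct (Req_dec a b) as [-> | hne]; [lra |].
    assert (hc : cos b < cos a) by (apply cos_decreasing_1; lra).
    left. apply (KK_decr mu); try lra; apply COS_bound.
Qed.

Theorem mainTheorem1 (f mu : R) (hf : f <> 0)
  (hmu0 : mu <> 0) (hmu1 : mu <> 1) (hmum1 : mu <> -1) :
  let X := gx f mu in
  let Y := gy f mu in
  let k := curvature X Y in
  (* (i) at xi = 0 *)
  (X 0 = f * (mu + 1) /\ Y 0 = 0 /\
   speed X Y 0 <> 0 /\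
   tangent_x X Y 0 = cos (PI / 2 * Rsgn (f * (mu + 1))) /\
   tangent_y X Y 0 = sin (PI / 2 * Rsgn (f * (mu + 1))) /\
   k 0 = 2 * mu / (Rabs f * Rabs (mu + 1) * (mu + 1))) /\
  (* (i) at xi = pi *)
  (X PI = f * (mu - 1) /\ Y PI = 0 /\
   speed X Y PI <> 0 /\
   tangent_x X Y PI = cos (PI / 2 * Rsgn (f * (mu - 1))) /\
   tangent_y X Y PI = sin (PI / 2 * Rsgn (f * (mu - 1))) /\
   k PI = 2 * mu / (Rabs f * Rabs (mu - 1) * (mu - 1))) /\
  (* (ii) concentric circles of curvature *)
  (center_x X Y 0 = f * (mu ^ 2 - 1) / (2 * mu) /\ center_y X Y 0 = 0 /\
   center_x X Y PI = f * (mu ^ 2 - 1) / (2 * mu) /\ center_y X Y PI = 0) /\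
  (* (iii) *)
  (1 < Rabs mu ->
    ((forall a b, 0 <= a <= PI -> 0 <= b <= PI ->
        arclen X Y a <= arclen X Y b -> k a <= k b) \/
     (forall a b, 0 <= a <= PI -> 0 <= b <= PI ->
        arclen X Y a <= arclen X Y b -> k b <= k a)) /\
    is_RInt (fun xi => k xi * speed X Y xi) 0 PI (2 * PI)).
Proof.
  intros X Y k.
  destruct (part12 f mu hf hmu0 hmu1 hmum1) as (P1 & P2 & P3).
  split; [exact P1 |]. split; [exact P2 |]. split; [exact P3 |].
  intros hm. split.
  - exact (mono_part f mu hf hm).
  - exact (integral_main f mu hf hm).
Qed.
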